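(* Let $\tau>0$ and $\lambda_0\in[0,+\infty)$ with $\tau\lambda_0\le1$. Let $G(E)=\frac{E}{(1-E)^2}$, an increasing bijection from $[0,1)$ onto $[0,+\infty)$. Define $E^\tau_0=\tau\lambda_0$ and, for $k\ge0$, $E^\tau_{k+1}\in[0,1)$ as the unique solution of $G(E^\tau_{k+1})=E^\tau_k$. Then for all $k\ge0$, \[\frac1\tau E^\tau_k\le\frac{\lambda_0}{\tau k\lambda_0(2-\tau\lambda_0)+1}.\] *)

(* Defs.v *)
From HB Require Import structures.
From mathcomp Require Import all_boot all_order all_algebra.
From mathcomp Require Import reals.
Set Implicit Arguments. Unset Strict Implicit. Unset Printing Implicit Defensive.
Import Order.TTheory GRing.Theory Num.Theory.
Local Open Scope ring_scope.

Definition Gfun (R : realType) (E : R) : R := E / (1 - E) ^+ 2.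

Definition is_Etau_seq (R : realType) (tau lambda0 : R) (E : nat -> R) : Prop :=
  E 0%N = tau * lambda0 /\
  forall k : nat, 0 <= E k.+1 /\ E k.+1 < 1 /\ Gfun (E k.+1) = E k.

(* Main.v *)
Require Import Defs.
From HB Require Import structures.
From mathcomp Require Import all_boot all_order all_algebra.
From mathcomp Require Import reals.
From mathcomp Require Import ring lra.
Import Order.TTheory GRing.Theory Num.Theory.
Local Open Scope ring_scope.

Lemma G_eq (R : realType) (x y : R) : x < 1 -> Gfun x = y -> x = y * (1 - x) ^+ 2.
Proof.
move=> hx <-; rewrite /Gfun mulfVK //.
by rewrite expf_neq0 // subr_eq0 eq_sym lt_eqF.
Qed.

Lemma inv_step (R : realType) (tau lambda0 : R) (E : nat -> R)
  (htau : 0 < tau) (hl0 : 0 <= lambda0) (htl : tau * lambda0 <= 1)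
  (hE : is_Etau_seq tau lambda0 E) (k : nat) :
  0 <= E k /\ E k <= tau * lambda0 /\
  E k * (k%:R * (tau * lambda0) * (2 - tau * lambda0) + 1) <= tau * lambda0.
Proof.
case: hE => h0 hS.
have ha : 0 <= tau * lambda0 by apply: mulr_ge0 => //; apply: ltW.
set a := tau * lambda0 in htl ha h0 *.
elim: k => [|k [hy0 [hya hyD]]].
  by rewrite h0 mul0r mul0r add0r mulr1 lexx.
have [hx0 [hx1 hG]] := hS k.
have hx := @G_eq R _ _ hx1 hG.
set x := E k.+1 in hx0 hx1 hx *.
set y := E k in hy0 hya hyD hx *.
set D := k%:R * a * (2 - a) + 1 in hyD *.
have hk : 0 <= k%:R :> R by apply: ler0n.
have hD : 1 <= D by rewrite /D lerDr; apply: mulr_ge0 => //; [apply: mulr_ge0 | lra].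
have hsq0 : 0 <= (1 - x) ^+ 2 by apply: sqr_ge0.
have hsq1 : (1 - x) ^+ 2 <= 1 by rewrite expr2; nra.
have hxy : x <= y by rewrite {1}hx; nra.
have hxa : x <= a by lra.
split => //; split => //.
have h1 : x * D <= a * (1 - x) ^+ 2.
  by rewrite {1}hx -mulrA [_ ^+ 2 * D]mulrC mulrA ler_wpM2r.
have h2 : a * x * (x - a) <= 0.
  have hax : 0 <= a * x by apply: mulr_ge0.
  by apply: mulr_ge0_le0 => //; rewrite subr_le0.
have -> : k.+1%:R * a * (2 - a) + 1 = D + a * (2 - a) by rewrite /D -addn1 natrD; ring.
apply: (le_trans (y := a * (1 - x) ^+ 2 + x * (a * (2 - a)))).
  by rewrite mulrDr lerD2r.
rewrite -subr_le0.
have -> : a * (1 - x) ^+ 2 + x * (a * (2 - a)) - a = a * x * (x - a) by ring.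
exact: h2.
Qed.

Theorem mainTheorem14 (R : realType) (tau lambda0 : R) (E : nat -> R)
  (htau : 0 < tau) (hl0 : 0 <= lambda0) (htl : tau * lambda0 <= 1)
  (hE : is_Etau_seq tau lambda0 E) :
  forall k : nat,
    tau^-1 * E k <= lambda0 / (tau * k%:R * lambda0 * (2 - tau * lambda0) + 1).
Proof.
move=> k.
have [_ [_ h]] := @inv_step R _ _ _ htau hl0 htl hE k.
set D := k%:R * (tau * lambda0) * (2 - tau * lambda0) + 1 in h.
have hk : 0 <= k%:R :> R by apply: ler0n.
have ha : 0 <= tau * lambda0 by apply: mulr_ge0 => //; apply: ltW.
have hD : 0 < D by rewrite /D; apply: ltr_wpDl; [apply: mulr_ge0; [apply: mulr_ge0|lra] | lra].
have -> : tau * k%:R * lambda0 * (2 - tau * lambda0) + 1 = D by rewrite /D; ring.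
have -> : lambda0 / D = tau^-1 * ((tau * lambda0) / D).
  by rewrite mulrA mulrA mulVf ?mul1r // gt_eqF.
apply: ler_wpM2l; first by rewrite invr_ge0 ltW.
by rewrite ler_pdivlMr.
Qed.
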